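(* Let $\alpha\in\mathcal{E}$, $R\in\mathbb{N}$, and natural numbers $x_0<\dots<x_R$ and $y_0<\dots<y_R$ with $\mathrm{MC}(\alpha)<y_0$ and $0<x_i\leq y_i$ for all $i\leq R$. If $\alpha[x_0][x_1]\cdots[x_R]>0$, then $\alpha[y_0][y_1]\cdots[y_R]>0$.
   Context: $\mathcal{E}$ is the set of ordinal notations below $\varepsilon_0$: formal sums $\omega^{\alpha_0}+\dots+\omega^{\alpha_n}$ with $\alpha_0\geq\dots\geq\alpha_n\in\mathcal{E}$ (the empty sum is $0$). The order is lexicographic: $\omega^{\alpha_0}+\dots+\omega^{\alpha_n}<\omega^{\beta_0}+\dots+\omega^{\beta_m}$ iff either $n<m$ and $\alpha_i=\beta_i$ for all $i\leq n$, or there is $i\leq\min\{n,m\}$ with $\alpha_j=\beta_j$ for $j<i$ and $\alpha_i<\beta_i$. Also $0<\alpha$ for $\alpha\neq0$. Write $1=\omega^0$. A nonzero ordinal is a successor if its last exponent $\alpha_n$ is $0$ and a limit otherwise. Every $\alpha$ has a Cantor normal form $\omega^{\alpha_0}a_0+\dots+\omega^{\alpha_n}a_n$ with $\alpha_0>\dots>\alpha_n$ and positive integers $a_i$. The maximal coefficient is $\mathrm{MC}(0)=0$ and $\mathrm{MC}(\alpha)=\max_i\{a_i,\mathrm{MC}(\alpha_i)\}$. Fundamental sequences, for $\alpha=\omega^{\alpha_0}+\dots+\omega^{\alpha_n}$ and $x\in\mathbb{N}$: $0[x]=0$. If $\alpha_n=0$ then $\alpha[x]=\omega^{\alpha_0}+\dots+\omega^{\alpha_{n-1}}$.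 If $\alpha_n=\beta+1$ then $\alpha[x]=\omega^{\alpha_0}+\dots+\omega^{\alpha_{n-1}}+\omega^\beta\cdot x$ ($x$ copies of $\omega^\beta$). If $\alpha_n$ is a limit then $\alpha[x]=\omega^{\alpha_0}+\dots+\omega^{\alpha_{n-1}}+\omega^{\alpha_n[x]}$. $\alpha[x_0][x_1]\cdots[x_R]$ denotes iterated application. *)

(* Defs.v *)
From Stdlib Require Import List Arith Bool Lia.
Import ListNotations.

(* Ord [a0; ...; an] denotes omega^a0 + ... + omega^an; Ord [] = 0. *)
Inductive ord : Type := Ord : list ord -> ord.

Definition exps (a : ord) : list ord := match a with Ord l => l end.

Inductive lt_ord : ord -> ord -> Prop :=
| lt_ord_intro : forall l m, lt_list l m -> lt_ord (Ord l) (Ord m)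
with lt_list : list ord -> list ord -> Prop :=
| lt_nil : forall b m, lt_list [] (b :: m)
| lt_head : forall a b l m, lt_ord a b -> lt_list (a :: l) (b :: m)
| lt_tail : forall a l m, lt_list l m -> lt_list (a :: l) (a :: m).

Definition le_ord (a b : ord) : Prop := lt_ord a b \/ a = b.

Fixpoint sorted_desc (l : list ord) : Prop :=
  match l with
  | [] => True
  | a :: l' => match l' with
               | [] => True
               | b :: _ => le_ord b a /\ sorted_desc l'
               end
  end.

Inductive inE : ord -> Prop :=
| inE_intro : forall l, Forall inE l -> sorted_desc l -> inE (Ord l).

Definition zero : ord := Ord [].
Definition one : ord := Ord [zero].

Fixpoint ord_eqb (a b : ord) {struct a} : bool :=
  match a, b with
  | Ord l, Ord m =>
    (fix go (l m : list ord) : bool :=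
       match l, m with
       | [], [] => true
       | x :: l', y :: m' => ord_eqb x y && go l' m'
       | _, _ => false
       end) l m
  end.

(* Maximal coefficient: since exponents are sorted, the Cantor normal form
   coefficient of an exponent e is the number of occurrences of e. *)
Fixpoint MC (a : ord) : nat :=
  match a with
  | Ord l =>
    let cnt (e : ord) := length (filter (fun y => ord_eqb y e) l) in
    (fix go (r : list ord) : nat :=
       match r with
       | [] => 0
       | e :: r' => Nat.max (Nat.max (cnt e) (MC e)) (go r')
       end) l
  end.

Fixpoint fs (a : ord) (x : nat) {struct a} : ord :=
  match a with
  | Ord l => Ord (
    (fix go (l : list ord) : list ord :=
       match l with
       | [] => []
       | [Ord []] => []                                  (* last exponent 0 *)
       | [y] =>
         match rev (exps y) with
         | Ord [] :: rest => repeat (Ord (rev rest)) x    (* exponent b+1 *)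
         | _ => [fs y x]                                 (* limit exponent *)
         end
       | y :: l' => y :: go l'
       end) l)
  end.

Fixpoint fs_iter (a : ord) (xs : list nat) : ord :=
  match xs with
  | [] => a
  | x :: xs' => fs_iter (fs a x) xs'
  end.

(* Main.v *)
Require Import Defs.
From Stdlib Require Import List Arith Lia.
Import ListNotations.

Definition golist (x : nat) : list ord -> list ord :=
  fix go (l : list ord) : list ord :=
       match l with
       | [] => []
       | [Ord []] => []
       | [y] =>
         match rev (exps y) with
         | Ord [] :: rest => repeat (Ord (rev rest)) x
         | _ => [fs y x]
         end
       | y :: l' => y :: go l'
       end.

Lemma fs_eq l x : fs (Ord l) x = Ord (golist x l).
Proof. reflexivity. Qed.

Lemma go_app x p m : m <> [] -> golist x (p ++ m) = p ++ golist x m.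
Proof.
  intros Hm. induction p as [|a p IH]; [reflexivity|].
  simpl. rewrite <- IH. destruct (p ++ m) eqn:E.
  - destruct p; destruct m; simpl in E; congruence.
  - destruct a as [[|]]; reflexivity.
Qed.

Lemma go_zero x : golist x [zero] = [].
Proof. reflexivity. Qed.

Lemma go_succ x e : golist x [Ord (e ++ [zero])] = repeat (Ord e) x.
Proof.
  unfold golist. destruct (e ++ [zero]) eqn:E.
  - destruct e; discriminate.
  - assert (H: rev (o :: l) = zero :: rev e) by (rewrite <- E, rev_app_distr; reflexivity).
    destruct o as [[|a l1]].
    + destruct l. * simpl in H. destruct e as [|? [|]]; simpl in E; try discriminate. reflexivity.
      * simpl exps. rewrite H. unfold zero. rewrite rev_involutive. reflexivity.
    + simpl exps. rewrite H. unfold zero. rewrite rev_involutive. reflexivity.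
Qed.

Lemma tri c : c = zero \/ (exists e, c = Ord (e ++ [zero])) \/
  (c <> zero /\ forall x, golist x [c] = [fs c x]).
Proof.
  destruct c as [l]. destruct l as [|a0 l0] eqn:El; [left; reflexivity|].
  right. rewrite <- El. destruct (exists_last (l:=l) ltac:(subst; discriminate)) as [l' [d Ed]].
  destruct d as [[|b r]].
  - left. exists l'. subst l. rewrite Ed. reflexivity.
  - right. split; [subst; discriminate|]. intros x.
    unfold golist. rewrite El. simpl exps. rewrite <- El, Ed, rev_app_distr. simpl.
    rewrite <- Ed, El. destruct a0 as [[|]]; try reflexivity.
Qed.

Lemma fs_zero x : fs zero x = zero.
Proof. reflexivity. Qed.

Lemma fs_succ e x : fs (Ord (e ++ [zero])) x = Ord e.
Proof. rewrite fs_eq, go_app by discriminate. rewrite go_zero, app_nil_r. reflexivity. Qed.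

Lemma fs_last p c x : fs (Ord (p ++ [c])) x = Ord (p ++ golist x [c]).
Proof. rewrite fs_eq, go_app by discriminate. reflexivity. Qed.

Lemma step1 p c : c <> zero -> fs (Ord (p ++ [c])) 1 = Ord (p ++ [fs c 1]).
Proof.
  intros Hc. rewrite fs_last. destruct (tri c) as [->|[[e ->]|[_ H]]].
  - congruence.
  - rewrite go_succ, fs_succ. reflexivity.
  - rewrite H. reflexivity.
Qed.

Fixpoint it (n k : nat) (a : ord) : ord :=
  match k with 0 => a | S k => it n k (fs a n) end.

Definition reach n b a := exists k, it n k a = b.

Lemma it_add n k1 k2 a : it n (k1 + k2) a = it n k2 (it n k1 a).
Proof. revert a; induction k1; simpl; auto. Qed.

Lemma reach_refl n a : reach n a a.
Proof. exists 0; reflexivity. Qed.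

Lemma reach_trans n a b c : reach n a b -> reach n b c -> reach n a c.
Proof. intros [k1 H1] [k2 H2]. exists (k2 + k1). rewrite it_add, H2; auto. Qed.

Lemma reach_step n a : reach n (fs a n) a.
Proof. exists 1; reflexivity. Qed.

Lemma it_zero n k : it n k zero = zero.
Proof. induction k; simpl; auto. Qed.

Definition S_ (b a : ord) := a <> zero /\ exists n, b = fs a n.

Lemma acc_zero : Acc S_ zero.
Proof. constructor. intros b [H _]. congruence. Qed.

Lemma acc_concat l : Acc S_ (Ord l) -> forall a, Acc S_ a -> forall m, a = Ord m -> Acc S_ (Ord (l ++ m)).
Proof.
  intros Hl a Ha. induction Ha as [a Ha IH]. intros m ->.
  destruct m as [|c m']. { rewrite app_nil_r; auto. }
  constructor. intros b [Hne [n ->]].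
  rewrite fs_eq, go_app by discriminate.
  apply (IH (fs (Ord (c :: m')) n)); [split; [discriminate| eauto] | reflexivity].
Qed.

Lemma acc_repeat d n : Acc S_ (Ord [d]) -> Acc S_ (Ord (repeat d n)).
Proof.
  intros H. induction n; [exact acc_zero|].
  exact (acc_concat [d] H _ IHn _ eq_refl).
Qed.

Lemma acc_one c : Acc S_ c -> Acc S_ (Ord [c]).
Proof.
  intros Hc. induction Hc as [c Hc IH].
  constructor. intros b [_ [n ->]].
  change (fs (Ord [c]) n) with (fs (Ord ([] ++ [c])) n). rewrite fs_last.
  destruct (tri c) as [->|[[e ->]|[Hne H]]].
  - exact acc_zero.
  - rewrite go_succ. change ([] ++ ?x) with x. apply acc_repeat. apply IH. split; [destruct e; discriminate|].
    exists 0. rewrite fs_succ. reflexivity.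
  - rewrite H. change ([] ++ ?x) with x. apply IH. split; eauto.
Qed.

Fixpoint acc_all (a : ord) : Acc S_ a :=
  match a with
  | Ord l => (fix F (l : list ord) : Acc S_ (Ord l) :=
      match l with
      | [] => acc_zero
      | c :: l' => acc_concat [c] (acc_one c (acc_all c)) _ (F l') l' eq_refl
      end) l
  end.

Lemma reach_zero n a : reach n zero a.
Proof.
  induction (acc_all a) as [a _ IH].
  destruct a as [[|c l]].
  all: try apply reach_refl.
  all: eapply reach_trans; [apply IH; split; [discriminate|eauto]|apply reach_step].
Qed.

Lemma reach_tail n q m : reach n (Ord q) (Ord (q ++ m)).
Proof.
  remember (Ord m) as a eqn:Ea. revert m Ea.
  induction (acc_all a) as [a _ IH]. intros m ->.
  destruct m as [|c m']. { rewrite app_nil_r; apply reach_refl. }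
  eapply reach_trans; [|apply reach_step].
  rewrite fs_eq, go_app by discriminate.
  eapply IH; [|reflexivity]. split; [discriminate|]. exists n. reflexivity.
Qed.

Lemma lift k p c : reach 1 (Ord (p ++ [it 1 k c])) (Ord (p ++ [c])).
Proof.
  revert c; induction k; intros c; [apply reach_refl|].
  simpl. destruct c as [[|a l]].
  - rewrite fs_zero, it_zero. apply reach_refl.
  - eapply reach_trans; [apply IHk|]. rewrite <- step1 by discriminate. apply reach_step.
Qed.

Lemma ord_ind' (P : ord -> Prop) : (forall l, Forall P l -> P (Ord l)) -> forall a, P a.
Proof.
  intros H. fix F 1. intros [l]. apply H.
  induction l as [|c l IH]; constructor; auto.
Qed.

Lemma repeat_S {A} (d : A) n : repeat d (S n) = repeat d n ++ [d].
Proof. induction n; simpl; auto. rewrite <- IHn. reflexivity. Qed.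

Lemma chain a j : reach 1 (fs a j) (fs a (S j)).
Proof.
  revert j. induction a as [l Hl] using ord_ind'. intros j.
  destruct l as [|c0 l0] eqn:El. { apply reach_refl. }
  rewrite <- El. destruct (exists_last (l:=l) ltac:(subst; discriminate)) as [p [c Ec]].
  subst l. rewrite Ec in *. rewrite !fs_last.
  destruct (tri c) as [->|[[e ->]|[Hne H]]].
  - apply reach_refl.
  - rewrite !go_succ, repeat_S, app_assoc. apply reach_tail.
  - rewrite !H. apply Forall_app in Hl. destruct Hl as [_ Hl]. inversion Hl; subst.
    destruct (H2 j) as [k Hk]. rewrite <- Hk. apply lift.
Qed.

Lemma chain_le a j j' : j <= j' -> reach 1 (fs a j) (fs a j').
Proof.
  induction 1; [apply reach_refl|]. eapply reach_trans; [apply IHle|apply chain].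
Qed.

Lemma mono a : forall m m' b, m <= m' -> reach m b a -> reach m' b a.
Proof.
  induction (acc_all a) as [a _ IH]. intros m m' b Hm [k Hk].
  destruct k as [|k]. { subst; apply reach_refl. }
  simpl in Hk.
  destruct a as [[|c l]].
  { rewrite fs_zero, it_zero in Hk. subst. apply reach_refl. }
  destruct m' as [|m'']. { assert (m = 0) by lia. subst m. exists (S k). exact Hk. }
  assert (H1 : reach (S m'') b (fs (Ord (c :: l)) m)).
  { refine (IH _ (conj _ (ex_intro _ m eq_refl)) m (S m'') b _ _); [discriminate|lia|exists k; exact Hk]. }
  assert (H2 : reach (S m'') (fs (Ord (c :: l)) m) (fs (Ord (c :: l)) (S m''))).
  { refine (IH _ (conj _ (ex_intro _ (S m'') eq_refl)) 1 (S m'') _ _ _); [discriminate|lia|].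
    apply chain_le; lia. }
  eapply reach_trans; [exact H1|]. eapply reach_trans; [exact H2|]. apply reach_step.
Qed.

Lemma stepl m b g x y : reach m b g -> m <= x -> 1 <= x -> x <= y -> reach x (fs b x) (fs g y).
Proof.
  intros H Hm H1 Hxy. apply (mono _ m x) in H; auto.
  assert (Hc : reach x (fs g x) (fs g y)) by (apply (mono _ 1); auto; apply chain_le; auto).
  destruct H as [[|k] Hk].
  - simpl in Hk. subst. exact Hc.
  - simpl in Hk. eapply reach_trans; [apply reach_step|].
    eapply reach_trans; [exists k; exact Hk|]. exact Hc.
Qed.

Fixpoint incr (m : nat) (xs : list nat) : Prop :=
  match xs with [] => True | x :: xs' => m <= x /\ incr x xs' end.

Lemma main_list xs : forall ys m b g, Forall2 (fun a c => 1 <= a /\ a <= c) xs ys ->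
  incr m xs -> reach m b g -> exists m', reach m' (fs_iter b xs) (fs_iter g ys).
Proof.
  induction xs as [|x xs IH]; intros ys m b g HF Hi Hr; inversion HF; subst.
  - simpl. eauto.
  - simpl. destruct Hi as [Hmx Hi]. destruct H1 as [H1 H1'].
    eapply IH; eauto. eapply stepl; eauto.
Qed.

Lemma seq_F2 (x y : nat -> nat) n : forall s, (forall i, s <= i < s + n -> 0 < x i /\ x i <= y i) ->
  Forall2 (fun a c => 1 <= a /\ a <= c) (map x (seq s n)) (map y (seq s n)).
Proof.
  induction n; intros s H; simpl; constructor.
  - specialize (H s ltac:(lia)). lia.
  - apply IHn. intros i Hi. apply H. lia.
Qed.

Lemma seq_incr (x : nat -> nat) n : forall s m, m <= x s -> (forall i, s <= i -> S i < s + n -> x i < x (S i)) ->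
  incr m (map x (seq s n)).
Proof.
  induction n; intros s m Hm H; simpl; auto. split; auto.
  destruct n; simpl; auto. apply IHn.
  - specialize (H s ltac:(lia) ltac:(lia)). lia.
  - intros i Hi Hi'. apply H; lia.
Qed.

Theorem lemma2p6 (alpha : ord) (R : nat) (x y : nat -> nat) :
  inE alpha ->
  (forall i, i < R -> x i < x (S i)) ->
  (forall i, i < R -> y i < y (S i)) ->
  MC alpha < y 0 ->
  (forall i, i <= R -> 0 < x i /\ x i <= y i) ->
  lt_ord zero (fs_iter alpha (map x (seq 0 (S R)))) ->
  lt_ord zero (fs_iter alpha (map y (seq 0 (S R)))).
Proof.
  intros _ Hx _ _ Hxy Hlt.
  destruct (main_list (map x (seq 0 (S R))) (map y (seq 0 (S R))) 0 alpha alpha)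
    as [m' [k Hk]].
  - apply seq_F2. intros i Hi. apply Hxy. lia.
  - apply seq_incr; [lia|]. intros i _ Hi. apply Hx. lia.
  - apply reach_refl.
  - destruct (fs_iter alpha (map y (seq 0 (S R)))) as [[|c l]] eqn:E.
    + fold zero in Hk. rewrite it_zero in Hk. rewrite <- Hk in Hlt.
      inversion Hlt; subst. inversion H1.
    + constructor. constructor.
Qed.
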